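(* Let $\{(x_i,y_i)\}_{i=1}^n$ be a dataset, $\alpha\in(0,1)$, and $g\in(0,1)$. Suppose an (unfair) learner is given which, on input any $w\in\Delta_n$, outputs a deterministic classifier $f$ with $\sum_{i=1}^n w_i\mathbf 1_{\{f(x_i)\neq y_i\}}\le g$. Consider the procedure ''AdaBoost + Average'' with $T$ rounds and step size $\eta>0$: set $w^1=(\frac1n,\dots,\frac1n)$; for $t=1,\dots,T$, feed $w^t$ to the learner, receive $f^t$ with losses $\ell_i^t=\mathbf 1_{\{f^t(x_i)\neq y_i\}}$, and set $w^{t+1}\in\Delta_n$ with $w_i^{t+1}\propto\exp\big(\eta\sum_{s=1}^t\ell_i^s\big)$; finally output the ensemble with model weights $\lambda=(\frac1T,\dots,\frac1T)$. Then there is an absolute constant $C$ such that for every $\delta>0$ and every $T\ge C\frac{\log n}{\delta^2}$, running this procedure with $\eta=\sqrt{8\log n/T}$ yields an ensemble whose training $\alpha$-CVaR zero-one loss $$\max_{w\in\Delta_n,\ w_i\le\frac1{\alpha n}\ \forall i}\ \sum_{i=1}^n w_i\,\frac1T\sum_{t=1}^T\ell_i^t$$ is at most $g+\delta$.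
   Context: $\Delta_n=\{w\in\mathbb R^n:w_i\ge0,\sum_iw_i=1\}$. The ensemble samples a base model uniformly from $f^1,\dots,f^T$ and predicts with it; its $\alpha$-CVaR zero-one loss is the displayed quantity, i.e. the maximum over weightings $w$ with $w_i\le 1/(\alpha n)$ of the weighted average of the per-sample expected zero-one losses. *)

(* Defs.v *)
From HB Require Import structures.
From mathcomp Require Import all_boot all_order all_algebra.
From mathcomp Require Import all_classical all_reals all_analysis.
Set Implicit Arguments. Unset Strict Implicit. Unset Printing Implicit Defensive.
Import Order.TTheory GRing.Theory Num.Theory.
Local Open Scope ring_scope.
Local Open Scope classical_set_scope.

Section Defs.
Variable R : realType.

Definition in_simplex (n : nat) (w : 'I_n -> R) : Prop :=
  (forall i, 0 <= w i) /\ \sum_(i < n) w i = 1.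

Definition zo_losses (X : Type) (Y : eqType) (n : nat)
  (x : 'I_n -> X) (y : 'I_n -> Y) (f : X -> Y) : 'I_n -> R :=
  fun i => ((f (x i) != y i) : nat)%:R.

Definition exp_weights (n : nat) (eta : R) (c : 'I_n -> R) : 'I_n -> R :=
  fun i => expR (eta * c i) / \sum_(j < n) expR (eta * c j).

(* cumulative losses sum_{s <= t} l^s_i of "AdaBoost" run with the learner;
   at round t+1 the learner receives exp_weights eta (cum_loss t)
   (for t = 0 this is the uniform vector w^1) *)
Fixpoint cum_loss (X : Type) (Y : eqType) (n : nat)
  (x : 'I_n -> X) (y : 'I_n -> Y) (learner : ('I_n -> R) -> X -> Y)
  (eta : R) (t : nat) : 'I_n -> R :=
  match t with
  | 0 => fun _ => 0
  | t'.+1 =>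
      let c := cum_loss x y learner eta t' in
      fun i => c i + zo_losses x y (learner (exp_weights eta c)) i
  end.

(* the base model f^{t+1} produced at round t+1 *)
Definition boost_model (X : Type) (Y : eqType) (n : nat)
  (x : 'I_n -> X) (y : 'I_n -> Y) (learner : ('I_n -> R) -> X -> Y)
  (eta : R) (t : nat) : X -> Y :=
  learner (exp_weights eta (cum_loss x y learner eta t)).

Definition ensemble_loss (X : Type) (Y : eqType) (n : nat)
  (x : 'I_n -> X) (y : 'I_n -> Y) (learner : ('I_n -> R) -> X -> Y)
  (eta : R) (T : nat) : 'I_n -> R :=
  fun i => T%:R^-1 * \sum_(t < T) zo_losses x y (boost_model x y learner eta t) i.

Definition cvar (n : nat) (alpha : R) (a : 'I_n -> R) : R :=
  sup [set s : R | exists w : 'I_n -> R,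
        [/\ in_simplex w, (forall i, w i <= (alpha * n%:R)^-1) &
            s = \sum_(i < n) w i * a i]].

End Defs.
Arguments zo_losses {R X Y n}.
Arguments exp_weights {R n}.
Arguments cum_loss {R X Y n}.
Arguments boost_model {R X Y n}.
Arguments ensemble_loss {R X Y n}.
Arguments in_simplex {R n}.
Arguments cvar {R n}.

(* Main.v *)
Require Import Defs.
From HB Require Import structures.
From mathcomp Require Import all_boot all_order all_algebra.
From mathcomp Require Import all_classical all_reals all_analysis.
From mathcomp Require Import lra zify.
Import Order.TTheory GRing.Theory Num.Theory.
Set Implicit Arguments. Unset Strict Implicit.
Local Open Scope ring_scope.

Lemma cvar_le (R : realType) n (alpha M : R) (a : 'I_n -> R) :
  0 <= M -> (forall i, a i <= M) -> cvar alpha a <= M.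
Proof.
move=> M0 Ha; rewrite /cvar.
set S := (X in sup X).
have [->|ne] := eqVneq S set0; first by rewrite sup0.
apply: ge_sup; first exact/set0P.
move=> s [w [[w0 w1] _ ->]].
apply: (@le_trans _ _ (\sum_(i < n) w i * M)).
  by apply: ler_sum => i _; apply: ler_wpM2l.
by rewrite -mulr_suml w1 mul1r.
Qed.

Lemma zo01 (R : realType) (X : Type) (Y : eqType) n (x : 'I_n -> X) (y : 'I_n -> Y) f i :
  zo_losses x y f i = 0 :> R \/ zo_losses x y f i = 1 :> R.
Proof. by rewrite /zo_losses; case: (f (x i) != y i); [right|left]. Qed.

Lemma zo_ge0 (R : realType) (X : Type) (Y : eqType) n (x : 'I_n -> X) (y : 'I_n -> Y) f i :
  0 <= zo_losses x y f i :> R.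
Proof. by case: (zo01 R x y f i) => ->. Qed.

Lemma zo_le1 (R : realType) (X : Type) (Y : eqType) n (x : 'I_n -> X) (y : 'I_n -> Y) f i :
  zo_losses x y f i <= 1 :> R.
Proof. by case: (zo01 R x y f i) => ->. Qed.

Lemma sum_ens (R : realType) (X : Type) (Y : eqType) n (x : 'I_n -> X) (y : 'I_n -> Y)
  learner (eta : R) T i :
  \sum_(t < T) zo_losses x y (boost_model x y learner eta t) i = cum_loss x y learner eta T i.
Proof.
elim: T => [|T IH]; first by rewrite big_ord0.
by rewrite big_ord_recr /= IH.
Qed.

Lemma cum_le (R : realType) (X : Type) (Y : eqType) n (x : 'I_n -> X) (y : 'I_n -> Y)
  learner (eta b : R) T i :
  (forall t, zo_losses x y (boost_model x y learner eta t) i <= b) ->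
  cum_loss x y learner eta T i <= T%:R * b.
Proof.
move=> H; elim: T => [|T IH] /=; first by rewrite mul0r.
rewrite -addn1 natrD mulrDl mul1r; apply: lerD => //; exact: H.
Qed.

Lemma sum_exp_gt0 (R : realType) n (c : 'I_n -> R) : (0 < n)%N ->
  0 < \sum_(j < n) expR (c j).
Proof.
case: n c => [//|n] c _; rewrite big_ord_recl.
by apply: ltr_pwDl; [exact: expR_gt0 | apply: sumr_ge0 => j _; apply/ltW/expR_gt0].
Qed.

Lemma exp_weights_simplex (R : realType) n (eta : R) (c : 'I_n -> R) : (0 < n)%N ->
  in_simplex (exp_weights eta c).
Proof.
move=> n0; have := sum_exp_gt0 (fun j => eta * c j) n0 => /= P.
split.
  by move=> i; rewrite /exp_weights divr_ge0 // ltW // expR_gt0.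
by rewrite /exp_weights -mulr_suml mulfV // gt_eqF.
Qed.
Lemma pot_step (R : realType) (X : Type) (Y : eqType) n (x : 'I_n -> X) (y : 'I_n -> Y)
  (g : R) learner (eta : R) t :
  (0 < n)%N -> 0 <= eta ->
  (forall w : 'I_n -> R, in_simplex w ->
       \sum_(i < n) w i * zo_losses x y (learner w) i <= g) ->
  \sum_(i < n) expR (eta * cum_loss x y learner eta t.+1 i) <=
  (\sum_(i < n) expR (eta * cum_loss x y learner eta t i)) * expR (g * (expR eta - 1)).
Proof.
move=> n0 e0 Hl.
set c := cum_loss x y learner eta t.
set P := \sum_(i < n) expR (eta * c i).
have P0 : 0 < P by exact: sum_exp_gt0.
set l := (zo_losses x y (learner (exp_weights eta c)) : 'I_n -> R).
have Hp := Hl _ (exp_weights_simplex eta c n0).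
have E : \sum_(i < n) expR (eta * cum_loss x y learner eta t.+1 i) =
   P + (expR eta - 1) * \sum_(i < n) expR (eta * c i) * l i.
  rewrite /P mulr_sumr -big_split /=; apply: eq_bigr => i _.
  rewrite /= -/c -/l mulrDr expRD.
  by rewrite /l; case: (zo01 R x y (learner (exp_weights eta c)) i) => ->; rewrite ?mulr0 ?mulr1 ?expR0; lra.
have E2 : \sum_(i < n) expR (eta * c i) * l i =
          P * \sum_(i < n) exp_weights eta c i * l i.
  rewrite mulr_sumr; apply: eq_bigr => i _.
  by rewrite /exp_weights -/P mulrA mulrCA mulfV ?mulr1 // gt_eqF.
rewrite E E2.
have ee : 0 <= expR eta - 1.
  by rewrite subr_ge0 -expR0 ler_expR.
apply: (@le_trans _ _ (P * (1 + g * (expR eta - 1)))).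
  rewrite mulrDr mulr1 lerD2l mulrCA ler_wpM2l ?(ltW P0) // mulrC.
  by apply: ler_wpM2r.
by rewrite ler_wpM2l ?(ltW P0) // expR_ge1Dx.
Qed.

Lemma pot_bound (R : realType) (X : Type) (Y : eqType) n (x : 'I_n -> X) (y : 'I_n -> Y)
  (g : R) learner (eta : R) T :
  (0 < n)%N -> 0 <= eta ->
  (forall w : 'I_n -> R, in_simplex w ->
       \sum_(i < n) w i * zo_losses x y (learner w) i <= g) ->
  \sum_(i < n) expR (eta * cum_loss x y learner eta T i) <=
  n%:R * expR (T%:R * (g * (expR eta - 1))).
Proof.
move=> n0 e0 Hl; elim: T => [|T IH].
  rewrite mul0r expR0 mulr1 /=.
  under eq_bigr do rewrite mulr0 expR0.
  by rewrite sumr_const card_ord.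
apply: le_trans (@pot_step _ _ _ _ x y g learner eta T n0 e0 Hl) _.
rewrite -addn1 natrD mulrDl mul1r expRD mulrA.
by rewrite ler_wpM2r // ltW // expR_gt0.
Qed.

Lemma term_le_pot (R : realType) n (f : 'I_n -> R) i :
  (forall j, 0 <= f j) -> f i <= \sum_(j < n) f j.
Proof.
move=> H; rewrite (bigD1 i) //= lerDl; exact: sumr_ge0.
Qed.
Lemma expR_le (R : realType) (e : R) : 0 <= e -> e <= 1/2 -> expR e - 1 <= e + 2 * e ^+ 2.
Proof.
move=> e0 e1.
have h := expR_ge1Dx (- e).
rewrite expRN in h.
have ep := expR_gt0 e.
have : (1 - e) * expR e <= 1.
  by rewrite -(ler_pdivlMr _ _ ep) div1r; lra.
have : 0 <= e ^+ 2 * (1 - 2 * e) by apply: mulr_ge0; [exact: sqr_ge0| lra].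
nra.
Qed.

Unset Implicit Arguments.
Theorem theorem2 (R : realType) :
  exists C : R,
  forall (X : Type) (Y : eqType) (n : nat) (x : 'I_n -> X) (y : 'I_n -> Y)
    (alpha g : R) (learner : ('I_n -> R) -> X -> Y),
    (0 < n)%N -> 0 < alpha < 1 -> 0 < g < 1 ->
    (forall w : 'I_n -> R, in_simplex w ->
       \sum_(i < n) w i * zo_losses x y (learner w) i <= g) ->
    forall (delta : R) (T : nat), 0 < delta ->
      C * ln (n%:R) / delta ^+ 2 <= T%:R ->
      cvar alpha (ensemble_loss x y learner (Num.sqrt (8 * ln (n%:R) / T%:R)) T)
        <= g + delta.
Proof.
exists 40 => X Y n x y alpha g learner n0 /andP[a0 a1] /andP[g0 g1] Hl delta T d0 HT.
set eta := Num.sqrt _.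
apply: cvar_le; first lra.
move=> i; rewrite /ensemble_loss sum_ens.
set L := cum_loss x y learner eta T i.
have L0 : 0 <= L by rewrite /L -sum_ens; apply: sumr_ge0 => t _; exact: zo_ge0.
have [T0|Tp] := eqVneq T 0%N.
  by rewrite T0 invr0 mul0r; lra.
have Tpos : 0 < T%:R :> R by rewrite ltr0n lt0n.
rewrite mulrC ler_pdivrMr //.
have [d1|d1] := leP 1 delta.
  have := @cum_le _ _ _ _ x y learner eta 1 T i (fun t => zo_le1 _ _ _ _ _).
  rewrite -/L => hL; nra.
have [n1|n2] := leqP n 1.
  have ij : forall j : 'I_n, j = i.
    move=> j; apply: val_inj; move: (ltn_ord i) (ltn_ord j); rewrite /=; lia.
  have hb : forall t, zo_losses x y (boost_model x y learner eta t) i <= g.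
    move=> t; have [w0 w1] := exp_weights_simplex eta (cum_loss x y learner eta t) n0.
    have := Hl _ (exp_weights_simplex eta (cum_loss x y learner eta t) n0).
    rewrite (bigD1 i) //= big1; last by move=> j /eqP; rewrite (ij j).
    move: w1; rewrite (bigD1 i) //= big1; last by move=> j /eqP; rewrite (ij j).
    by rewrite addr0 => ->; rewrite addr0 mul1r.
  have := @cum_le _ _ _ _ x y learner eta g T i hb.
  rewrite -/L => hL; nra.
have lnp : 0 < ln (n%:R : R) by apply: ln_gt0; rewrite ltr1n.
have e2 : eta ^+ 2 = 8 * ln n%:R / T%:R.
  by rewrite sqr_sqrtr // divr_ge0 // ?mulr_ge0 // ltW.
have e2T : eta ^+ 2 * T%:R = 8 * ln n%:R.
  by rewrite e2 divfK // gt_eqF.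
move: HT; rewrite ler_pdivrMr ?exprn_gt0 // => HT.
have eta0 : 0 <= eta by exact: sqrtr_ge0.
have etap : 0 < eta.
  rewrite lt_neqAle eta0 andbT; apply/eqP => E.
  by move: e2T; rewrite -E expr0n /= mul0r; lra.
have eb : 5 * eta ^+ 2 <= delta ^+ 2 by nra.
have eh : eta <= 1/2 by nra.
have ed : 17 * eta <= 8 * delta by nra.
have key : eta * L <= ln n%:R + T%:R * (g * (expR eta - 1)).
  rewrite -ler_expR expRD lnK ?posrE ?ltr0n //.
  apply: le_trans (pot_bound T n0 eta0 Hl).
  by apply: (term_le_pot (f := fun j => expR (eta * cum_loss x y learner eta T j))) => j; apply/ltW/expR_gt0.
have := expR_le eta0 eh => hx.
have hg : g * (expR eta - 1) <= g * eta + 2 * eta ^+ 2.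
  have : g * (expR eta - 1) <= g * (eta + 2 * eta ^+ 2) by rewrite ler_wpM2l // ltW.
  have : 0 <= eta ^+ 2 by exact: sqr_ge0.
  nra.
have hT : T%:R * (g * (expR eta - 1)) <= T%:R * (g * eta + 2 * eta ^+ 2).
  by rewrite ler_wpM2l // ltW.
have hm := mulr_ge0 (mulr_ge0 (ltW Tpos) eta0) (_ : 0 <= 8 * delta - 17 * eta).
have : eta * L <= eta * ((g + delta) * T%:R).
  have h8 : 8 * ln n%:R = eta ^+ 2 * T%:R by [].
  nra.
by rewrite ler_pM2l.
Qed.
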